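(* Let $S$ be a quasi-tree of a map $\mathcal M$ and let $e$ be an edge of $\mathcal M$. If $e\in S$, then $\widetilde{\Lambda}(\mathcal M/ e, S\setminus \{e\})=\widetilde{\Lambda}(\mathcal M, S)- e$. If $e\notin S$, then $\widetilde{\Lambda}(\mathcal M\setminus e, S)=\widetilde{\Lambda}(\mathcal M, S)- e$.
   Context: A map is a triple $\mathcal M=(B,\sigma,\alpha)$ with $B$ finite, $\sigma,\alpha\in\mathrm{Sym}(B)$, $\alpha$ a fixed-point-free involution, $\langle\sigma,\alpha\rangle$ transitive on $B$; permutations compose as functions. Edges are the cycles of $\alpha$; $\underline b=\{b,\alpha(b)\}$. For $\mu\in\mathrm{Sym}(B)$, $B'\subseteq B$, $\mu_{|B'}(b)=\mu^k(b)$ with $k$ least positive such that $\mu^k(b)\in B'$. Deletion: $\mathcal M\setminus e=(B\setminus e,\sigma_{|B\setminus e},\alpha_{|B\setminus e})$; contraction: $\mathcal M/e=(B\setminus e,(\sigma\alpha)_{|B\setminus e}\alpha_{|B\setminus e},\alpha_{|B\setminus e})$. The tour of a set $F$ of edges is $\tau$ with $\tau(b)=\sigma(\alpha(b))$ if $\underline b\in F$ and $\tau(b)=\sigma(b)$ otherwise; a quasi-tree is a set of edges whose tour is a single cycle on the flag set. For a quasi-tree $S$ with tour $\tau$, $\widetilde\Lambda(\mathcal M,S)$ is the chord diagram with the flags placed on a circle in the cyclic order of $\tau$, a chord joining the two flags of each edge, chords of edges in $S$ colored $1$ and the others colored $2$. $\widetilde\Lambda(\mathcal M,S)-e$ denotes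 the bicolored chord diagram with the chord of $e$ removed. *)

(* Defs.v *)
From mathcomp Require Import all_boot.
Set Implicit Arguments. Unset Strict Implicit. Unset Printing Implicit Defensive.

Section Maps.
Variable T : finType.

(* mu_{|D}(b) = mu^k(b), k least positive with mu^k(b) \in D (for b \in D);
   identity outside D (normalisation). *)
Definition restr (mu : T -> T) (D : {set T}) (b : T) : T :=
  if b \in D then
    iter (find (fun k => iter k.+1 mu b \in D) (iota 0 #|T|)).+1 mu b
  else b.

(* A map: flag set B (a subset of the ambient finite type T), and
   permutations sigma, alpha of B (identity outside B). *)
Record cmap := Map { flags : {set T}; msigma : T -> T; malpha : T -> T }.

Definition is_perm_on (D : {set T}) (f : T -> T) : Prop :=
  {in D &, injective f} /\ {in D, forall b, f b \in D} /\
  (forall b, b \notin D -> f b = b).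

Definition is_map (M : cmap) : Prop :=
  [/\ is_perm_on (flags M) (msigma M), is_perm_on (flags M) (malpha M),
      {in flags M, forall b, malpha M (malpha M b) = b /\ malpha M b != b} &
      {in flags M &, forall b c,
          connect (fun x y => (y == msigma M x) || (y == malpha M x)) b c}].

Definition edge_of (M : cmap) (b : T) : {set T} := [set b; malpha M b].

Definition edges (M : cmap) : {set {set T}} :=
  [set edge_of M b | b in flags M].

Definition deletion (M : cmap) (e : {set T}) : cmap :=
  let D := flags M :\: e in
  Map D (restr (msigma M) D) (restr (malpha M) D).

Definition contraction (M : cmap) (e : {set T}) : cmap :=
  let D := flags M :\: e in
  Map D (fun b => restr (fun x => msigma M (malpha M x)) D (restr (malpha M) D b))
        (restr (malpha M) D).

Definition tour (M : cmap) (F : {set {set T}}) (b : T) : T :=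
  if b \in flags M then
    (if edge_of M b \in F then msigma M (malpha M b) else msigma M b)
  else b.

Definition is_quasi_tree (M : cmap) (S : {set {set T}}) : Prop :=
  S \subset edges M /\
  {in flags M &, forall b c, fconnect (tour M S) b c}.

(* Labelled bicoloured chord diagram: points (flags), the cyclic successor
   along the circle, the chord involution, and colours (1 or 2; 0 outside). *)
Record chord_diagram := CD {
  cd_pts : {set T};
  cd_next : {ffun T -> T};
  cd_chord : {ffun T -> T};
  cd_col : {ffun T -> nat} }.

Definition Lambda (M : cmap) (S : {set {set T}}) : chord_diagram :=
  CD (flags M)
     [ffun b => if b \in flags M then tour M S b else b]
     [ffun b => if b \in flags M then malpha M b else b]
     [ffun b => if b \in flags M then (if edge_of M b \in S then 1 else 2) else 0].

Definition cd_remove (L : chord_diagram) (e : {set T}) : chord_diagram :=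
  let D := cd_pts L :\: e in
  CD D
     [ffun b => if b \in D then restr (cd_next L) D b else b]
     [ffun b => if b \in D then cd_chord L b else b]
     [ffun b => if b \in D then cd_col L b else 0].

End Maps.

(* Main.v *)
Require Import Defs.
From mathcomp Require Import all_boot zify.
Set Implicit Arguments. Unset Strict Implicit. Unset Printing Implicit Defensive.

Section H.
Variable T : finType.
Implicit Types (f g : T -> T) (D B : {set T}).

Lemma restr_ext f g D : f =1 g -> restr f D =1 restr g D.
Proof.
move=> fg b; rewrite /restr; case: ifP => // _.
rewrite (eq_find (a2 := fun k => iter k.+1 g b \in D)); last first.
  by move=> k /=; rewrite -!iterS (eq_iter fg k.+1).
exact: eq_iter.
Qed.

Lemma restr_out f D b : b \notin D -> restr f D b = b.
Proof. by rewrite /restr => /negbTE ->. Qed.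

Lemma restr_at f D b j : b \in D -> 0 < j -> j <= #|T| -> iter j f b \in D ->
  (forall i, 0 < i < j -> iter i f b \notin D) -> restr f D b = iter j f b.
Proof.
move=> bD j0 jT hj hi; rewrite /restr bD.
set P := (fun k => iter k.+1 f b \in D).
set s := iota 0 #|T|.
have jm1 : j.-1 < #|T| by case: j j0 jT {hj hi}.
have hs : has P s.
  apply/hasP; exists j.-1; first by rewrite mem_iota add0n.
  by rewrite /P prednK.
have fs : find P s < #|T| by rewrite -(size_iota 0 #|T|) -has_find.
have := nth_find 0 hs; rewrite {1}/P /s nth_iota -/s // ?add0n => hk.
have [lt|gt|eq] := ltngtP (find P s) j.-1.
- have := hi (find P s).+1; rewrite hk -ltn_predRL lt.
  by move=> /(_ isT).
- have := before_find 0 gt; rewrite /P /s nth_iota -/s // ?add0n.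
  by rewrite prednK // hj.
- by rewrite eq prednK.
Qed.

Lemma iter_in f B x n : {in B, forall y, f y \in B} -> x \in B -> iter n f x \in B.
Proof. by move=> fB xB; elim: n => //= n IH; apply: fB. Qed.

Lemma uniq_card (s : seq T) : uniq s -> size s <= #|T|.
Proof. by move/card_uniqP <-; apply: max_card. Qed.

Lemma restr_spec f B D a a' x :
  {in B &, injective f} -> {in B, forall y, f y \in B} -> D \subset B ->
  {in B, forall y, y \notin D -> (y == a) || (y == a')} -> x \in D ->
  exists j, [/\ 0 < j, j <= #|T|, iter j f x \in D,
     (forall i, 0 < i < j -> iter i f x \notin D) & restr f D x = iter j f x].
Proof.
move=> finj fB DB Ea xD.
have xB : x \in B by apply: (subsetP DB).
have iB n : iter n f x \in B by apply: iter_in.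
have go : forall j, 0 < j -> j <= #|T| -> iter j f x \in D ->
     (forall i, 0 < i < j -> iter i f x \notin D) ->
  exists j, [/\ 0 < j, j <= #|T|, iter j f x \in D,
     (forall i, 0 < i < j -> iter i f x \notin D) & restr f D x = iter j f x].
  move=> j j0 jT hj hi; exists j; split => //; exact: restr_at.
case h1: (f x \in D).
  apply: (go 1) => //; last by case=> [|[]].
  by apply: (uniq_card (s:=[:: x])).
case h2: (f (f x) \in D).
  apply: (go 2) => //; last by case=> [|[|[]]] //= _; rewrite h1.
  apply: (uniq_card (s:=[:: x; f x])) => /=.
  by rewrite inE andbT; apply/eqP => ex; rewrite -ex xD in h1.
have n12 : f x != f (f x).
  apply/eqP => /(finj _ _ (iB 0) (iB 1)) /= ex.
  by rewrite -ex xD in h1.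
have n13 : f x != f (f (f x)).
  apply/eqP => /(finj _ _ (iB 0) (iB 2)) /= ex.
  by rewrite -ex xD in h2.
have n23 : f (f x) != f (f (f x)).
  apply/eqP => /(finj _ _ (iB 1) (iB 2)) /= ex.
  by rewrite -ex eqxx in n12.
case h3: (f (f (f x)) \in D).
  apply: (go 3) => //; last by case=> [|[|[|[]]]] //= _; rewrite ?h1 ?h2.
  apply: (uniq_card (s:=[:: x; f x; f (f x)])) => /=.
  rewrite !inE n12 !andbT negb_or; apply/andP; split; apply/eqP => ex.
    by rewrite -ex xD in h1.
  by rewrite -ex xD in h2.
have := Ea _ (iB 1) (negbT h1); have := Ea _ (iB 2) (negbT h2);
have := Ea _ (iB 3) (negbT h3) => /=.
move: n12 n13 n23 => /eqP n12 /eqP n13 /eqP n23.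
by case/orP=> /eqP e3; case/orP=> /eqP e2; case/orP=> /eqP e1; congruence.
Qed.

Lemma restr_match f tau B D a a' b x :
  {in B &, injective f} -> {in B, forall y, f y \in B} -> D \subset B ->
  {in B, forall y, y \notin D -> (y == a) || (y == a')} ->
  {in B, forall c, c \notin D -> tau c = f c} ->
  b \in D -> x \in D -> tau b = f x -> restr tau D b = restr f D x.
Proof.
move=> finj fB DB Ea tf bD xD tbx.
have [j [j0 jT hj hi ->]] := restr_spec finj fB DB Ea xD.
have xB : x \in B by apply: (subsetP DB).
have eq_it : forall i, 0 < i <= j -> iter i tau b = iter i f x.
  elim=> // i IH /andP [_ ij].
  case: i IH ij => [|i] IH ij; first by [].
  rewrite iterS IH ?ij ?andbT //; last by apply: ltnW.
  rewrite tf //; first by apply: iter_in.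
  by apply: hi; rewrite ij.
rewrite -eq_it ?j0 ?leqnn //; apply: restr_at => //.
  by rewrite eq_it ?j0 ?leqnn.
by move=> i /andP [i0 ij]; rewrite eq_it ?i0 ?(ltnW ij) //; apply: hi; rewrite i0.
Qed.

Lemma restr_connect f B D a a' b c :
  {in B &, injective f} -> {in B, forall y, f y \in B} -> D \subset B ->
  {in B, forall y, y \notin D -> (y == a) || (y == a')} ->
  b \in D -> c \in D -> fconnect f b c -> fconnect (restr f D) b c.
Proof.
move=> finj fB DB Ea bD cD /iter_findex.
move: (findex f b c) => n; elim: n {-2}n (leqnn n) b bD => [|N IH] n hn b bD.
  by case: n hn => // _ <-; apply: connect0.
case: n hn => [|n] hn; first by move=> <-; apply: connect0.
move=> hc.
have [j [j0 jT hj hi hr]] := restr_spec finj fB DB Ea bD.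
have jn : j <= n.+1.
  rewrite leqNgt; apply/negP => lt.
  by have := hi n.+1; rewrite lt andbT hc cD => /(_ isT).
apply: (connect_trans (fconnect1 _ b)).
rewrite hr; apply: (IH (n.+1 - j)) => //.
  by move: hn j0; clear; lia.
by rewrite -iterD subnK.
Qed.

Lemma restr_first f B D a a' x :
  {in B &, injective f} -> {in B, forall y, f y \in B} -> D \subset B ->
  {in B, forall y, y \notin D -> (y == a) || (y == a')} -> x \in D ->
  f x \in D -> restr f D x = f x.
Proof.
move=> finj fB DB Ea xD fxD.
have [j [j0 jT hj hi ->]] := restr_spec finj fB DB Ea xD.
case: j j0 {jT hj} hi => // [[|j]] // _ /(_ 1 isT); by rewrite fxD.
Qed.
End H.

Unset Implicit Arguments.
Set Strict Implicit.

Theorem lemma10 (T : finType) (M : cmap T) (S : {set {set T}}) (e : {set T}) :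
  is_map M -> is_quasi_tree M S -> e \in edges M ->
  (e \in S ->
     is_quasi_tree (contraction M e) (S :\ e) /\
     Lambda (contraction M e) (S :\ e) = cd_remove (Lambda M S) e) /\
  (e \notin S ->
     is_quasi_tree (deletion M e) S /\
     Lambda (deletion M e) S = cd_remove (Lambda M S) e).
Proof.
move=> [] [sinj [sB sout]] [ainj [aB aout]] ainv _ [SE Sconn] /imsetP [a aBa he]; subst e.
set B := flags M; set D := B :\: edge_of M a.
have DB : D \subset B by apply: subsetDl.
have Ea : {in B, forall y, y \notin D -> (y == a) || (y == (malpha M) a)}.
  by move=> y yB; rewrite !inE yB andbT negbK.
have inDB b : b \in D -> b \in B by move/(subsetP DB).
have aD b : b \in D -> (malpha M) b \in D.
  move=> bD; have bB := inDB _ bD; move: bD; rewrite !inE aB // andbT !negb_or.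
  case/andP=> [/andP [ba bal] _]; apply/andP; split; apply/eqP => h.
    by move: bal; rewrite -h (ainv b bB).1 eqxx.
  by move: ba; rewrite (ainj _ _ bB aBa h) eqxx.
have r_al b : b \in D -> restr (malpha M) D b = (malpha M) b.
  by move=> bD; apply: (restr_first ainj aB DB Ea bD (aD b bD)).
have edge_al b : b \in B -> edge_of M ((malpha M) b) = edge_of M b.
  by move=> bB; rewrite /edge_of (ainv b bB).1; apply/setP => z; rewrite !in_set2 orbC.
have edge_ne b : b \in D -> edge_of M b != edge_of M a.
  move=> bD; apply/eqP => h; move: bD; rewrite inE -h /edge_of !inE eqxx.
  by [].
have edge_e c : c \in B -> c \notin D -> edge_of M c = edge_of M a.
  move=> cB; move/(Ea c cB); case/orP => /eqP -> //.
  exact: edge_al.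
have tauB : {in B, forall y, (tour M S) y \in B}.
  by move=> y yB; rewrite /tour yB; case: ifP => _; apply: sB => //; apply: aB.
have tauinj : {in B &, injective (tour M S)}.
  move=> b c bB cB; rewrite /tour bB cB.
  case: ifP => hb; case: ifP => hc.
  - move/(sinj _ _ (aB _ bB) (aB _ cB)) => /(congr1 (malpha M)).
    by rewrite (ainv b bB).1 (ainv c cB).1.
  - move/(sinj _ _ (aB _ bB) cB) => h.
    by move: hc; rewrite -h edge_al // hb.
  - move/(sinj _ _ bB (aB _ cB)) => h.
    by move: hb; rewrite h edge_al // hc.
  - exact: (sinj _ _ bB cB).
have sainj : {in B &, injective (fun x => (msigma M) ((malpha M) x))}.
  move=> x y xB yB /(sinj _ _ (aB _ xB) (aB _ yB)) /(congr1 (malpha M)).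
  by rewrite (ainv x xB).1 (ainv y yB).1.
have saB : {in B, forall y, (msigma M) ((malpha M) y) \in B}.
  by move=> y yB; apply: sB; apply: aB.
have finish : forall (M' : cmap T) (S' : {set {set T}}),
    flags M' = D -> malpha M' = restr (malpha M) D ->
    S' \subset S -> edge_of M a \notin S' ->
    (forall b, b \in D -> (edge_of M b \in S') = (edge_of M b \in S)) ->
    tour M' S' =1 restr (tour M S) D ->
    is_quasi_tree M' S' /\ Lambda M' S' = cd_remove (Lambda M S) (edge_of M a).
  move=> M' S' fM' aM' S'S eS' hS' ht.
  have eM' b : b \in D -> edge_of M' b = edge_of M b.
    by move=> bD; rewrite /edge_of aM' r_al.
  split.
    split.
      apply/subsetP => E ES'.
      have /imsetP [c cB cE] := subsetP SE E (subsetP S'S E ES').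
      have cD : c \in D.
        apply: contraT => cnD; move: ES'; rewrite cE edge_e //.
        by rewrite (negbTE eS').
      by rewrite cE -eM' //; apply/imsetP; exists c => //; rewrite fM'.
    move=> b c; rewrite fM' => bD cD.
    rewrite (eq_fconnect ht).
    apply: (restr_connect tauinj tauB DB Ea bD cD).
    exact: Sconn (inDB _ bD) (inDB _ cD).
  rewrite /Lambda /cd_remove /= fM' -/B -/D; congr CD; apply/ffunP => b; rewrite !ffunE;
    case: ifP => // bD.
  - rewrite ht; apply: restr_ext => y; rewrite ffunE.
    by case: ifP => // yB; rewrite /tour yB.
  - by rewrite aM' r_al // inDB.
  - by rewrite eM' // hS' // inDB.
split => heS.
- apply: finish => //.
  + exact: subD1set.
  + by rewrite !inE eqxx.
  + by move=> b bD; rewrite !inE edge_ne.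
  move=> b; rewrite /tour /=.
  case: ifP => bD; last by rewrite restr_out ?bD.
  have bB := inDB _ bD.
  have -> : edge_of (contraction M (edge_of M a)) b = edge_of M b.
    by rewrite /edge_of /= r_al.
  rewrite !inE edge_ne //=.
  symmetry; case: ifP => hb.
  + rewrite r_al // r_al ?aD // (ainv b bB).1.
    apply: (restr_match sainj saB DB Ea) => //.
      move=> c cB cD; rewrite /tour cB edge_e // heS //.
    by rewrite /tour bB hb.
  + rewrite r_al //.
    apply: (restr_match sainj saB DB Ea) => //.
    * move=> c cB cD; rewrite /tour cB edge_e // heS //.
    * exact: aD.
    by rewrite /tour bB hb (ainv b bB).1.
- apply: finish => //.
  move=> b; rewrite /tour /=.
  case: ifP => bD; last by rewrite restr_out ?bD.
  have bB := inDB _ bD.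
  have -> : edge_of (deletion M (edge_of M a)) b = edge_of M b.
    by rewrite /edge_of /= r_al.
  symmetry; case: ifP => hb.
  + rewrite r_al //.
    apply: (restr_match sinj sB DB Ea) => //.
    * move=> c cB cD; rewrite /tour cB edge_e // (negbTE heS) //.
    * exact: aD.
    by rewrite /tour bB hb.
  + apply: (restr_match sinj sB DB Ea) => //.
    * move=> c cB cD; rewrite /tour cB edge_e // (negbTE heS) //.
    by rewrite /tour bB hb.
Qed.
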